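(* Let $d\ge1$, $m,c>0$, and let $p,p_*,\hat p',\hat p'_*\in\mathbb{R}^d$ with associated energies $p_0=\sqrt{(mc)^2+|p|^2}$, $p_{0*}=\sqrt{(mc)^2+|p_*|^2}$, $\hat p_0'=\sqrt{(mc)^2+|\hat p'|^2}$, $\hat p_{0*}'=\sqrt{(mc)^2+|\hat p'_*|^2}$ satisfy the conservation laws \[ p+p_*=\hat p'+\hat p'_*\quad\text{and}\quad p_0+p_{0*}=\hat p_0'+\hat p_{0*}'. \] Then there exists $\omega\in S^{d-1}$ such that \[ \hat p'=\frac{p+p_*}{2}+\frac g2\Big(I_d+(\rho-1)\frac{v\otimes v}{|v|^2}\Big)\omega,\qquad \hat p'_*=\frac{p+p_*}{2}-\frac g2\Big(I_d+(\rho-1)\frac{v\otimes v}{|v|^2}\Big)\omega, \] and \[ \hat p_0'=\frac{p_0+p_{0*}}{2}+\frac g2\,\frac{p+p_*}{\sqrt s}\cdot\omega,\qquad \hat p_{0*}'=\frac{p_0+p_{0*}}{2}-\frac g2\,\frac{p+p_*}{\sqrt s}\cdot\omega. \]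
   Context: $s=(p_0+p_{0*})^2-|p+p_*|^2$, $g=\sqrt{|p-p_*|^2-(p_0-p_{0*})^2}$, $v=\frac{p+p_*}{p_0+p_{0*}}$, $\rho=\frac{p_0+p_{0*}}{\sqrt s}$; when $v=0$ (so $\rho=1$) the term $(\rho-1)\frac{v\otimes v}{|v|^2}$ is interpreted as $0$. *)

(* Defs.v *)
From mathcomp Require Import all_boot all_order all_algebra.
Set Implicit Arguments. Unset Strict Implicit. Unset Printing Implicit Defensive.
Import Order.TTheory GRing.Theory Num.Theory.
Local Open Scope ring_scope.

Section Defs.
Variable R : rcfType.
Variable d : nat.

Definition dotv (u w : 'cV[R]_d) : R := \sum_(i < d) u i 0 * w i 0.
Definition norm2 (u : 'cV[R]_d) : R := dotv u u.
Definition normv (u : 'cV[R]_d) : R := Num.sqrt (norm2 u).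

Definition energy (m c : R) (p : 'cV[R]_d) : R := Num.sqrt ((m * c) ^+ 2 + norm2 p).

Definition s_inv (m c : R) (p ps : 'cV[R]_d) : R :=
  (energy m c p + energy m c ps) ^+ 2 - norm2 (p + ps).
Definition g_rel (m c : R) (p ps : 'cV[R]_d) : R :=
  Num.sqrt (norm2 (p - ps) - (energy m c p - energy m c ps) ^+ 2).
Definition v_vel (m c : R) (p ps : 'cV[R]_d) : 'cV[R]_d :=
  (energy m c p + energy m c ps)^-1 *: (p + ps).
Definition rho_fac (m c : R) (p ps : 'cV[R]_d) : R :=
  (energy m c p + energy m c ps) / Num.sqrt (s_inv m c p ps).

(* I_d + (rho - 1) (v ⊗ v)/|v|^2, with the second term read as 0 when v = 0 *)
Definition Lambda (m c : R) (p ps : 'cV[R]_d) : 'M[R]_d :=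
  let v := v_vel m c p ps in
  1%:M + (if v == 0 then 0
          else ((rho_fac m c p ps - 1) / norm2 v) *: (v *m v^T)).
End Defs.

(* Main.v *)
Require Import Defs.
From mathcomp Require Import all_boot all_order all_algebra.
From mathcomp Require Import ring lra.
Import Order.TTheory GRing.Theory Num.Theory.
Local Open Scope ring_scope.

Section H.
Context {R : rcfType} {d : nat}.
Implicit Types u v w : 'cV[R]_d.

Lemma dotvC u w : dotv u w = dotv w u.
Proof. by rewrite /dotv; apply: eq_bigr => i _; rewrite mulrC. Qed.
Lemma dotvDl u v w : dotv (u + v) w = dotv u w + dotv v w.
Proof. by rewrite /dotv -big_split; apply: eq_bigr => i _; rewrite mxE mulrDl. Qed.
Lemma dotvZl a u w : dotv (a *: u) w = a * dotv u w.
Proof. by rewrite /dotv mulr_sumr; apply: eq_bigr => i _; rewrite mxE mulrA. Qed.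
Lemma dotvNl u w : dotv (- u) w = - dotv u w.
Proof. by rewrite -scaleN1r dotvZl mulN1r. Qed.
Lemma dotvBl u v w : dotv (u - v) w = dotv u w - dotv v w.
Proof. by rewrite dotvDl dotvNl. Qed.
Lemma dotvDr u v w : dotv w (u + v) = dotv w u + dotv w v.
Proof. by rewrite dotvC dotvDl !(dotvC w). Qed.
Lemma dotvZr a u w : dotv w (a *: u) = a * dotv w u.
Proof. by rewrite dotvC dotvZl dotvC. Qed.
Lemma dotvBr u v w : dotv w (u - v) = dotv w u - dotv w v.
Proof. by rewrite dotvC dotvBl !(dotvC w). Qed.
Lemma dotv0l w : dotv 0 w = 0.
Proof. by rewrite -(scale0r 0) dotvZl mul0r. Qed.

Lemma norm2_ge0 u : 0 <= norm2 u.
Proof. by apply: sumr_ge0 => i _; rewrite -expr2 sqr_ge0. Qed.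

Lemma norm2_eq0 u : norm2 u = 0 -> u = 0.
Proof.
move=> h; apply/matrixP => i j; rewrite ord1 mxE.
have /eqP : u i 0 * u i 0 = 0.
  apply: (psumr_eq0P _ h) => // k _; by rewrite -expr2 sqr_ge0.
by rewrite mulf_eq0 orbb => /eqP.
Qed.

Lemma vvT_mul u w : (u *m u^T) *m w = dotv u w *: u.
Proof.
rewrite -mulmxA.
have -> : u^T *m w = (dotv u w)%:M.
  apply/matrixP => i j; rewrite !ord1 !mxE eqxx mulr1n /dotv.
  by apply: eq_bigr => k _; rewrite mxE.
by rewrite mul_mx_scalar.
Qed.

Lemma CS u w : dotv u w ^+ 2 <= norm2 u * norm2 w.
Proof.
have := norm2_ge0 (norm2 u *: w - dotv u w *: u).
rewrite /norm2 !(dotvBl, dotvBr, dotvZl, dotvZr) (dotvC w u).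
rewrite -/(norm2 u) -/(norm2 w).
have := norm2_ge0 u; rewrite le0r => /orP [/eqP h0|hp] h.
  by rewrite (norm2_eq0 _ h0) dotv0l expr0n /= -(scale0r 0) /norm2 dotvZl !mul0r.
nra.
Qed.

Lemma dotv0r w : dotv w 0 = 0.
Proof. by rewrite dotvC dotv0l. Qed.

Lemma w_exists (P q : 'cV[R]_d) (E r b : R) : 0 < E -> 0 < r ->
  r ^+ 2 = E ^+ 2 - norm2 P -> b = dotv P q ->
  exists w, (1%:M + (if E^-1 *: P == 0 then 0 else
     ((E / r - 1) / norm2 (E^-1 *: P)) *: ((E^-1 *: P) *m (E^-1 *: P)^T))) *m w = q
   /\ norm2 w = norm2 q - (b / E) ^+ 2 /\ dotv (r^-1 *: P) w = b / E.
Proof.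
move=> EP rP r2 hb.
have E0 : E != 0 by rewrite gt_eqF.
have r0 : r != 0 by rewrite gt_eqF.
case: (eqVneq P 0) => HP.
  subst P; exists q; rewrite dotv0l in hb.
  by rewrite !scaler0 eqxx addr0 mul1mx hb mul0r expr0n /= subr0 dotv0l.
have aP : 0 < norm2 P.
  rewrite lt0r norm2_ge0 andbT; apply/eqP => h; move/eqP: HP; apply.
  by rewrite (norm2_eq0 _ h).
have a0 : norm2 P != 0 by rewrite gt_eqF.
have vn0 : (E^-1 *: P == 0) = false by rewrite scaler_eq0 invr_eq0 (negbTE E0) (negbTE HP).
exists (q + ((r / E - 1) * b / norm2 P) *: P).
split; last split.
- rewrite vn0 mulmxDl mul1mx -scalemxAl vvT_mul.
  rewrite /norm2 !(dotvZl, dotvZr, dotvDr) -hb -/(norm2 P).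
  rewrite -addrA [X in q + X](_ : _ = 0) ?addr0 //.
  rewrite !scalerA -scalerDl; apply/eqP; rewrite scaler_eq0; apply/orP; left; apply/eqP.
  by field; rewrite ?E0 ?r0 ?a0.
- rewrite /norm2 !(dotvZl, dotvZr, dotvDr, dotvDl) (dotvC q P) -hb -/(norm2 P) -/(norm2 q).
  have ha : norm2 P = E ^+ 2 - r ^+ 2 by rewrite r2; ring.
  rewrite ha; field.
  by rewrite -ha a0 E0.
- rewrite !(dotvZl, dotvZr, dotvDr) -hb -/(norm2 P).
  by field; rewrite ?E0 ?r0 ?a0.
Qed.
End H.

Theorem propositionA2 (R : rcfType) (d : nat) (hd : (1 <= d)%N) (m c : R)
  (hm : 0 < m) (hc : 0 < c) (p ps hp hps : 'cV[R]_d) :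
  p + ps = hp + hps ->
  energy m c p + energy m c ps = energy m c hp + energy m c hps ->
  exists omega : 'cV[R]_d,
    norm2 omega = 1 /\
    hp = 2^-1 *: (p + ps) + (g_rel m c p ps / 2) *: (Lambda m c p ps *m omega) /\
    hps = 2^-1 *: (p + ps) - (g_rel m c p ps / 2) *: (Lambda m c p ps *m omega) /\
    energy m c hp = (energy m c p + energy m c ps) / 2
       + g_rel m c p ps / 2 * dotv ((Num.sqrt (s_inv m c p ps))^-1 *: (p + ps)) omega /\
    energy m c hps = (energy m c p + energy m c ps) / 2
       - g_rel m c p ps / 2 * dotv ((Num.sqrt (s_inv m c p ps))^-1 *: (p + ps)) omega.
Proof.
move=> Hcons Hen.
pose K := (m * c) ^+ 2.
have Kp : 0 < K by rewrite /K exprn_gt0 // mulr_gt0.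
have en2 : forall x : 'cV[R]_d, energy m c x ^+ 2 = K + norm2 x.
  by move=> x; apply: sqr_sqrtr; apply: addr_ge0; [exact: ltW | exact: norm2_ge0].
have enp : forall x : 'cV[R]_d, 0 < energy m c x.
  by move=> x; rewrite sqrtr_gt0; apply: ltr_wpDr => //; exact: norm2_ge0.
have hG : g_rel m c p ps = Num.sqrt (norm2 (p - ps) - (energy m c p - energy m c ps) ^+ 2) by [].
have hs : s_inv m c p ps = (energy m c p + energy m c ps) ^+ 2 - norm2 (p + ps) by [].
have hL : Lambda m c p ps = 1%:M + (if (energy m c p + energy m c ps)^-1 *: (p + ps) == 0 then 0
     else (((energy m c p + energy m c ps) / Num.sqrt (s_inv m c p ps) - 1)
       / norm2 ((energy m c p + energy m c ps)^-1 *: (p + ps))) *: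
        (((energy m c p + energy m c ps)^-1 *: (p + ps)) *m
         ((energy m c p + energy m c ps)^-1 *: (p + ps))^T)) by [].
rewrite hG hL; clear hG hL.
have e1p := enp hp; have e2p := enp hps.
have p0p := enp p; have p0sp := enp ps.
have e1s := en2 hp; have e2s := en2 hps; have p0s2 := en2 p; have p0ss2 := en2 ps.
have sP : 0 < s_inv m c p ps.
  rewrite hs /norm2 !(dotvDl, dotvDr) (dotvC ps p) -/(norm2 p) -/(norm2 ps) sqrrD p0s2 p0ss2.
  have cs := CS p ps.
  have n1 := norm2_ge0 p; have n2 := norm2_ge0 ps.
  have lt2 : dotv p ps ^+ 2 < (energy m c p * energy m c ps) ^+ 2.
    rewrite exprMn p0s2 p0ss2; nra.
  have lt1 : dotv p ps < energy m c p * energy m c ps.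
    have := mulr_gt0 p0p p0sp; nra.
  nra.
have r2 := sqr_sqrtr (ltW sP).
have rP : 0 < Num.sqrt (s_inv m c p ps) by rewrite sqrtr_gt0.
rewrite hs in r2.
move: (Num.sqrt (s_inv m c p ps)) r2 rP => r r2 rP.
move: Hen e1p e2p p0p p0sp e1s e2s p0s2 p0ss2 r2 rP.
move: (energy m c hp) (energy m c hps) (energy m c p) (energy m c ps) => e1 e2 p0 p0s.
move=> Hen e1p e2p p0p p0sp e1s e2s p0s2 p0ss2 r2 rP.
set P := p + ps in Hcons r2 *.
set E := p0 + p0s in Hen r2 *.
have EP : 0 < E by rewrite /E addr_gt0.
have E0 : E != 0 by rewrite gt_eqF.
pose q := hp - 2^-1 *: P.
have hhp : hp = 2^-1 *: P + q by rewrite /q addrC subrK.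
have hhps : hps = 2^-1 *: P - q.
  have -> : hps = P - hp by rewrite Hcons addrC addKr.
  have h2 : 2^-1 *: P + 2^-1 *: P = P.
    by rewrite -scalerDl (_ : 2^-1 + 2^-1 = 1 :> R) ?scale1r //; field.
  by rewrite /q opprB addrA -{1}h2 addrAC.
have par : norm2 (p - ps) = 2 * norm2 p + 2 * norm2 ps - norm2 P.
  rewrite /P /norm2 !(dotvBl, dotvBr, dotvDl, dotvDr) (dotvC ps p); ring.
clearbody P q.
pose a := norm2 P; pose b := dotv P q; pose cq := norm2 q.
have n1 : norm2 hp = a / 4 + b + cq.
  rewrite hhp /norm2 !(dotvDl, dotvDr, dotvZl, dotvZr) (dotvC q P) -/b -/(norm2 q) -/cq -/(norm2 P) -/a.
  by field.
have n2 : norm2 hps = a / 4 - b + cq.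
  rewrite hhps /norm2 !(dotvBl, dotvBr, dotvZl, dotvZr) (dotvC q P) -/b -/(norm2 q) -/cq -/(norm2 P) -/a.
  by field.
rewrite n1 in e1s; rewrite n2 in e2s.
have e2E : e2 = E - e1 by rewrite Hen addrC addKr.
rewrite e2E in e2s.
pose q0 := b / E.
have e1E : e1 = E / 2 + q0.
  have hb : b = E * e1 - E ^+ 2 / 2 by nra.
  by rewrite /q0 hb; field.
have e2E' : e2 = E / 2 - q0 by rewrite e2E e1E; field.
set G := norm2 (p - ps) - (p0 - p0s) ^+ 2.
have hGq : G = 4 * (cq - q0 ^+ 2).
  rewrite /G par -/a; rewrite e1E in e1s; rewrite e1E in e2s.
  have sm : E ^+ 2 / 2 + 2 * q0 ^+ 2 = 2 * K + a / 2 + 2 * cq.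
    have h := congr1 (fun x => x) e1s. lra.
  have hE : E ^+ 2 = p0 ^+ 2 + p0s ^+ 2 + 2 * (p0 * p0s) by rewrite /E; ring.
  have hmm : (p0 - p0s) ^+ 2 = p0 ^+ 2 + p0s ^+ 2 - 2 * (p0 * p0s) by ring.
  rewrite hmm; lra.
have [w [Lw [Nw Dw]]] := w_exists P q E r b EP rP r2 (erefl b).
set L := (1%:M + _) in Lw *.
have G0 : 0 <= G by rewrite hGq -Nw mulr_ge0 // norm2_ge0.
have hq0 : cq - q0 ^+ 2 = G / 4 by rewrite hGq; field.
rewrite hq0 in Nw.
case: (eqVneq G 0) => HG.
  have w0 : w = 0 by apply: norm2_eq0; rewrite Nw HG mul0r.
  rewrite w0 mulmx0 in Lw; rewrite w0 dotv0r in Dw.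
  exists (delta_mx (Ordinal hd) 0).
  rewrite HG sqrtr0 mul0r !scale0r !mul0r addr0 subr0 addr0 subr0; split.
    rewrite /norm2 /dotv (bigD1 (Ordinal hd)) //= big1 ?addr0.
      by rewrite !mxE !eqxx mulr1.
    by move=> i /negbTE hi; rewrite !mxE hi mul0r.
  split; first by rewrite hhp -Lw addr0.
  split; first by rewrite hhps -Lw subr0.
  by rewrite e1E e2E' /q0 -Dw addr0 subr0.
have GP : 0 < G by rewrite lt0r HG.
have gP : 0 < Num.sqrt G by rewrite sqrtr_gt0.
have g0 : Num.sqrt G != 0 by rewrite gt_eqF.
have g2 : Num.sqrt G ^+ 2 = G by rewrite sqr_sqrtr // ltW.
exists ((2 / Num.sqrt G) *: w); split.
  rewrite /norm2 dotvZl dotvZr -/(norm2 w) Nw.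
  have -> : G / 4 = Num.sqrt G ^+ 2 / 4 by rewrite g2.
  field.
  by rewrite g0.
rewrite -!scalemxAr Lw !scalerA dotvZr Dw mulrA.
have -> : Num.sqrt G / 2 * (2 / Num.sqrt G) = 1 by field; rewrite g0.
by rewrite !scale1r !mul1r -hhp -hhps -e1E -e2E'.
Qed.
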